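(* Let $\mathfrak{n}$ be the real 3-dimensional Heisenberg Lie algebra with basis $(x_1,x_2,x_3)$ and only nonzero bracket $[x_1,x_2]=x_3$. (i) Any linear map $J:\mathfrak{n}\to\mathfrak{n}$ which has zero torsion and is an extension of a rank 1 CR-structure $(\mathfrak{p},J_\mathfrak{p})$ on $\mathfrak{n}$ with $\mathfrak{p}$ nonabelian is equivalent to a unique endomorphism with matrix (in the basis $(x_1,x_2,x_3)$) $\begin{pmatrix}0&-1&0\\1&0&0\\0&0&c\end{pmatrix}$, $c\in\mathbb{R}$. (ii) Any linear map $J:\mathfrak{n}\to\mathfrak{n}$ which is an extension of a rank 1 CR-structure $(\mathfrak{p},J_\mathfrak{p})$ on $\mathfrak{n}$ with $\mathfrak{p}$ abelian is equivalent to a unique endomorphism with matrix (in the basis $(x_1,x_2,x_3)$) $\begin{pmatrix}t&0&0\\0&0&1\\0&-1&0\end{pmatrix}$, $t\in\mathbb{R}$; and such a $J$ has nonzero torsion.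
   Context: A rank 1 CR-structure on a real Lie algebra $\mathfrak{g}$ is a pair $(\mathfrak{p},J_\mathfrak{p})$ where $\mathfrak{p}$ is a 2-dimensional vector subspace of $\mathfrak{g}$ and $J_\mathfrak{p}:\mathfrak{p}\to\mathfrak{p}$ is linear with (a) $J_\mathfrak{p}^2=-1$, (b) $[X,Y]-[J_\mathfrak{p}X,J_\mathfrak{p}Y]\in\mathfrak{p}$ for all $X,Y\in\mathfrak{p}$, (c) $[J_\mathfrak{p}X,J_\mathfrak{p}Y]-[X,Y]-J_\mathfrak{p}[J_\mathfrak{p}X,Y]-J_\mathfrak{p}[X,J_\mathfrak{p}Y]=0$ for all $X,Y\in\mathfrak{p}$. A linear map $J:\mathfrak{g}\to\mathfrak{g}$ is an extension of it if $J|_\mathfrak{p}=J_\mathfrak{p}$. $\mathfrak{p}$ is abelian if $[X,Y]=0$ for all $X,Y\in\mathfrak{p}$. A linear map $J$ has zero torsion if $[JX,JY]-[X,Y]-J[JX,Y]-J[X,JY]=0$ for all $X,Y\in\mathfrak{g}$. Two linear maps $J,J'$ are equivalent if $J'=\Phi\circ J\circ\Phi^{-1}$ for some Lie algebra automorphism $\Phi$. The matrix of a linear map in a basis $(e_j)$ is $(\xi^i_j)$ with $Je_j=\sum_i\xi^i_je_i$. *)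

(* Defs.v *)
(* The real Heisenberg algebra n = R^3 (column vectors),
   basis x1 = e_0, x2 = e_1, x3 = e_2, bracket [x1,x2] = x3. *)
From HB Require Import structures.
From mathcomp Require Import all_boot all_order all_algebra.
From mathcomp Require Import reals.
Set Implicit Arguments. Unset Strict Implicit. Unset Printing Implicit Defensive.
Import Order.TTheory GRing.Theory Num.Theory.
Local Open Scope ring_scope.

Section Heis.
Variable R : realType.

Definition vec := 'cV[R]_3.

Definition i0 : 'I_3 := @Ordinal 3 0 isT.
Definition i1 : 'I_3 := @Ordinal 3 1 isT.
Definition i2 : 'I_3 := @Ordinal 3 2 isT.

Definition x3 : vec := delta_mx i2 0.

Definition hbr (u v : vec) : vec :=
  (u i0 0 * v i1 0 - u i1 0 * v i0 0) *: x3.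

(* A linear map J : n -> n is given by its matrix (xi^i_j), J e_j = sum_i xi^i_j e_i,
   acting on column vectors by J *m v. *)

(* J is an extension of a rank 1 CR-structure (p, J_p) with J_p = J|_p :
   p is a 2-dimensional subspace, J maps p into p (so J_p := J|_p : p -> p
   is linear), and conditions (a), (b), (c) hold. *)
Definition ext_CR (J : 'M[R]_3) (p : {vspace vec}) : Prop :=
  [/\ \dim p = 2%N,
      (forall X, X \in p -> J *m X \in p),
      (forall X, X \in p -> J *m (J *m X) = - X),
      (forall X Y, X \in p -> Y \in p -> hbr X Y - hbr (J *m X) (J *m Y) \in p)
    & (forall X Y, X \in p -> Y \in p ->
        hbr (J *m X) (J *m Y) - hbr X Y - J *m hbr (J *m X) Y
          - J *m hbr X (J *m Y) = 0)].

Definition abelian_sub (p : {vspace vec}) : Prop :=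
  forall X Y, X \in p -> Y \in p -> hbr X Y = 0.

Definition zero_torsion (J : 'M[R]_3) : Prop :=
  forall X Y : vec, hbr (J *m X) (J *m Y) - hbr X Y - J *m hbr (J *m X) Y
                    - J *m hbr X (J *m Y) = 0.

Definition lie_aut (Phi : 'M[R]_3) : Prop :=
  Phi \in unitmx /\ forall X Y : vec, Phi *m hbr X Y = hbr (Phi *m X) (Phi *m Y).

Definition equiv_map (J J' : 'M[R]_3) : Prop :=
  exists Phi, lie_aut Phi /\ J' = Phi *m J *m invmx Phi.

Definition Mc (c : R) : 'M[R]_3 :=
  \matrix_(i < 3, j < 3)
    (if (i == i0) && (j == i1) then -1
     else if (i == i1) && (j == i0) then 1
     else if (i == i2) && (j == i2) then c else 0).

Definition Mt (t : R) : 'M[R]_3 :=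
  \matrix_(i < 3, j < 3)
    (if (i == i0) && (j == i0) then t
     else if (i == i1) && (j == i2) then 1
     else if (i == i2) && (j == i1) then -1 else 0).

End Heis.

(* Main.v *)
Require Import Defs.
From HB Require Import structures.
From mathcomp Require Import all_boot all_order all_algebra.
From mathcomp Require Import reals.
From mathcomp Require Import ring lra.
From Stdlib Require Import Classical.
Import Order.TTheory GRing.Theory Num.Theory.
Local Open Scope ring_scope.

Section S.
Variable R : realType.
Local Notation vec := (vec R).
Local Notation x3 := (x3 R).

Definition om (u v : vec) : R := u i0 0 * v i1 0 - u i1 0 * v i0 0.
Definition v3 (a b c : R) : vec :=
  \matrix_(i < 3, j < 1) (if i == i0 then a else if i == i1 then b else c).
Definition mk3 (u v w : vec) : 'M[R]_3 :=
  \matrix_(i < 3, j < 3) (if j == i0 then u i 0 else if j == i1 then v i 0 else w i 0).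

Lemma ord3 (i : 'I_3) : [\/ i = i0, i = i1 | i = i2].
Proof.
case: i => [[|[|[|k]]] Hk]; [constructor 1|constructor 2|constructor 3|by []];
  by apply: val_inj.
Qed.

Lemma vecP (u v : vec) : u i0 0 = v i0 0 -> u i1 0 = v i1 0 -> u i2 0 = v i2 0 -> u = v.
Proof.
move=> h0 h1 h2; apply/matrixP => i j; rewrite (ord1 j).
by case: (ord3 i) => ->.
Qed.

Lemma matP (A B : 'M[R]_3) : (forall i, A i i0 = B i i0) -> (forall i, A i i1 = B i i1) ->
  (forall i, A i i2 = B i i2) -> A = B.
Proof. move=> h0 h1 h2; apply/matrixP => i j; by case: (ord3 j) => ->. Qed.

Lemma mulE (A : 'M[R]_3) (B : 'M[R]_(3,1)) i j :
  (A *m B) i j = A i i0 * B i0 j + A i i1 * B i1 j + A i i2 * B i2 j.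
Proof.
rewrite mxE !big_ord_recl big_ord0 addr0 addrA.
by congr (A i _ * B _ j + A i _ * B _ j + A i _ * B _ j); apply: val_inj.
Qed.
Lemma mulE3 (A : 'M[R]_3) (B : 'M[R]_3) i j :
  (A *m B) i j = A i i0 * B i0 j + A i i1 * B i1 j + A i i2 * B i2 j.
Proof.
rewrite mxE !big_ord_recl big_ord0 addr0 addrA.
by congr (A i _ * B _ j + A i _ * B _ j + A i _ * B _ j); apply: val_inj.
Qed.

Lemma x3_0 : x3 i0 0 = 0. Proof. by rewrite mxE. Qed.
Lemma x3_1 : x3 i1 0 = 0. Proof. by rewrite mxE. Qed.
Lemma x3_2 : x3 i2 0 = 1. Proof. by rewrite mxE. Qed.
Lemma v3_0 a b c : v3 a b c i0 0 = a. Proof. by rewrite mxE. Qed.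
Lemma v3_1 a b c : v3 a b c i1 0 = b. Proof. by rewrite mxE. Qed.
Lemma v3_2 a b c : v3 a b c i2 0 = c. Proof. by rewrite mxE. Qed.
Lemma mk3_0 u v w i : mk3 u v w i i0 = u i 0. Proof. by rewrite mxE. Qed.
Lemma mk3_1 u v w i : mk3 u v w i i1 = v i 0. Proof. by rewrite mxE. Qed.
Lemma mk3_2 u v w i : mk3 u v w i i2 = w i 0. Proof. by rewrite mxE. Qed.
Lemma addE (u v : 'M[R]_(3,1)) i j : (u + v) i j = u i j + v i j. Proof. by rewrite mxE. Qed.
Lemma oppE (u : 'M[R]_(3,1)) i j : (- u) i j = - u i j. Proof. by rewrite mxE. Qed.
Lemma sclE a (u : 'M[R]_(3,1)) i j : (a *: u) i j = a * u i j. Proof. by rewrite mxE. Qed.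
Lemma zeroE i j : (0 : 'M[R]_(3,1)) i j = 0. Proof. by rewrite mxE. Qed.
Lemma hbrE u v i : hbr u v i 0 = om u v * x3 i 0. Proof. by rewrite mxE. Qed.
Lemma hbr_om u v : hbr u v = om u v *: x3. Proof. by []. Qed.

Lemma trMc c : \tr (@Mc R c) = c.
Proof. rewrite /mxtrace !big_ord_recl big_ord0 !mxE /=. lra. Qed.
Lemma trMt t : \tr (@Mt R t) = t.
Proof. rewrite /mxtrace !big_ord_recl big_ord0 !mxE /=. lra. Qed.

Lemma mulmk3 (J : 'M[R]_3) u v w : J *m mk3 u v w = mk3 (J *m u) (J *m v) (J *m w).
Proof.
apply: matP => i; rewrite !mulE3 ?mk3_0 ?mk3_1 ?mk3_2 !mulE //.
Qed.

Lemma mk3Mc u v w c : mk3 u v w *m @Mc R c = mk3 v (- u) (c *: w).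
Proof.
apply: matP => i; rewrite !mulE3 ?mk3_0 ?mk3_1 ?mk3_2 !mxE /=; ring.
Qed.
Lemma mk3Mt u v w t : mk3 u v w *m @Mt R t = mk3 (t *: u) (- w) v.
Proof.
apply: matP => i; rewrite !mulE3 ?mk3_0 ?mk3_1 ?mk3_2 !mxE /=; ring.
Qed.

Ltac simp := rewrite ?mulE ?hbrE ?x3_0 ?x3_1 ?x3_2 ?v3_0 ?v3_1 ?v3_2 /om.

Definition qf (a b c d g h l : R) (i j : nat) : R :=
  match i, j with
  | 0, 0 => d / l | 0, 1 => - b / l | 0, _ => 0
  | 1, 0 => - c / l | 1, 1 => a / l | 1, _ => 0
  | _, 0 => - (g * d - h * c) / (l * l) | _, 1 => - (h * a - g * b) / (l * l)
  | _, _ => 1 / l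
  end.

Lemma aut3 (u v w : vec) : w i0 0 = 0 -> w i1 0 = 0 -> w i2 0 = om u v -> om u v != 0 ->
  mk3 u v w \in unitmx /\ forall U V, mk3 u v w *m hbr U V = hbr (mk3 u v w *m U) (mk3 u v w *m V).
Proof.
move=> h0 h1 h2 hn; split.
  pose Q := \matrix_(i < 3, j < 3) qf (u i0 0) (v i0 0) (u i1 0) (v i1 0) (u i2 0) (v i2 0)
             (w i2 0) i j.
  suff /mulmx1_unit [] : Q *m mk3 u v w = 1%:M by [].
  rewrite /om in hn.
  apply: matP => i; rewrite !mulE3 ?mk3_0 ?mk3_1 ?mk3_2 !mxE /= ?h0 ?h1 ?h2 /om;
    case: (ord3 i) => -> /=; field; move: hn; apply: contraNN => /eqP -> //.
move=> U V; apply: vecP; rewrite !mulE ?mk3_0 ?mk3_1 ?mk3_2 !hbrE /om !mulE ?mk3_0 ?mk3_1 ?mk3_2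
  ?h0 ?h1 ?h2 ?x3_0 ?x3_1 ?x3_2 /om; ring.
Qed.

Lemma equivP (J M P : 'M[R]_3) : P \in unitmx ->
  (forall U V, P *m hbr U V = hbr (P *m U) (P *m V)) -> J *m P = P *m M -> equiv_map J M.
Proof.
move=> Pu HP HJ; exists (invmx P); split; last first.
  by rewrite invmxK -mulmxA HJ mulKmx.
split; first by rewrite unitmx_inv.
move=> X Y; rewrite -{1}(mulKVmx Pu X) -{1}(mulKVmx Pu Y) -HP mulKmx //.
Qed.

Lemma tr_equiv (J M : 'M[R]_3) : equiv_map J M -> \tr M = \tr J.
Proof.
case=> Phi [[Pu _] ->]; by rewrite mxtrace_mulC mulmxA mulVmx // mul1mx.
Qed.

Lemma sq0 (a d x y : R) : d * x - a * y = 0 -> d * y + a * x = 0 -> (d ^+ 2 + a ^+ 2) * x = 0.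
Proof.
move=> h1 h2; have -> : (d ^+ 2 + a ^+ 2) * x = d * (d * x - a * y) + a * (d * y + a * x) by ring.
by rewrite h1 h2 !mulr0 addr0.
Qed.

Lemma vec_neq0 (X : vec) : X != 0 -> [\/ X i0 0 != 0, X i1 0 != 0 | X i2 0 != 0].
Proof.
move=> hX; case: (eqVneq (X i0 0) 0) => h0; last by constructor 1.
case: (eqVneq (X i1 0) 0) => h1; last by constructor 2.
case: (eqVneq (X i2 0) 0) => h2; last by constructor 3.
have X0 : X = 0 by apply: vecP; rewrite mxE.
by rewrite X0 eqxx in hX.
Qed.

Lemma sq_pair (a d : R) (X : vec) : X != 0 ->
  (forall k, (d ^+ 2 + a ^+ 2) * X k 0 = 0) -> a = 0.
Proof.
move=> hX hk; have hs : d ^+ 2 + a ^+ 2 = 0.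
  apply/eqP; apply: contraNT hX => hs.
  apply/eqP; apply: vecP; rewrite mxE; apply: (mulfI hs); by rewrite hk mulr0.
nra.
Qed.

Lemma x3_in (J : 'M[R]_3) (p : {vspace vec}) (X : vec) :
  X \in p -> X != 0 -> J *m X \in p -> J *m (J *m X) = - X -> om X (J *m X) = 0 -> x3 \in p.
Proof.
set Y := J *m X => Xp hX Yp HJY ho.
have Z1 : Y i0 0 *: X - X i0 0 *: Y = (Y i0 0 * X i2 0 - X i0 0 * Y i2 0) *: x3.
  apply: vecP; rewrite ?(addE, oppE, sclE, zeroE, x3_0, x3_1, x3_2); move: ho; rewrite /om => ho; lra.
have Z2 : Y i1 0 *: X - X i1 0 *: Y = (Y i1 0 * X i2 0 - X i1 0 * Y i2 0) *: x3.
  apply: vecP; rewrite ?(addE, oppE, sclE, zeroE, x3_0, x3_1, x3_2); move: ho; rewrite /om => ho; lra.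
have Zp1 : Y i0 0 *: X - X i0 0 *: Y \in p by rewrite memvB // memvZ.
have Zp2 : Y i1 0 *: X - X i1 0 *: Y \in p by rewrite memvB // memvZ.
case: (eqVneq (Y i0 0 * X i2 0 - X i0 0 * Y i2 0) 0) => k1; last first.
  by rewrite -[x3](scalerK k1) -Z1 memvZ.
case: (eqVneq (Y i1 0 * X i2 0 - X i1 0 * Y i2 0) 0) => k2; last first.
  by rewrite -[x3](scalerK k2) -Z2 memvZ.
rewrite k1 scale0r in Z1; rewrite k2 scale0r in Z2.
have W1 := congr1 (mulmx J) Z1; have W2 := congr1 (mulmx J) Z2.
rewrite mulmxBr -!scalemxAr HJY mulmx0 in W1.
rewrite mulmxBr -!scalemxAr HJY mulmx0 in W2.
have a0 : X i0 0 = 0.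
  apply: (@sq_pair (X i0 0) (Y i0 0) X hX) => k; apply: (@sq0 (X i0 0) (Y i0 0) (X k 0) (Y k 0)).
    by have := congr1 (fun v : 'cV[R]_3 => v k 0) Z1; rewrite ?(addE, oppE, sclE, zeroE).
  by have := congr1 (fun v : 'cV[R]_3 => v k 0) W1; rewrite ?(addE, oppE, sclE, zeroE) mulrN opprK.
have b0 : X i1 0 = 0.
  apply: (@sq_pair (X i1 0) (Y i1 0) X hX) => k; apply: (@sq0 (X i1 0) (Y i1 0) (X k 0) (Y k 0)).
    by have := congr1 (fun v : 'cV[R]_3 => v k 0) Z2; rewrite ?(addE, oppE, sclE, zeroE).
  by have := congr1 (fun v : 'cV[R]_3 => v k 0) W2; rewrite ?(addE, oppE, sclE, zeroE) mulrN opprK.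
have c0 : X i2 0 != 0.
  by case: (vec_neq0 X hX); rewrite ?a0 ?b0 ?eqxx.
have -> : x3 = (X i2 0)^-1 *: X.
  apply: vecP; rewrite ?(addE, oppE, sclE, zeroE, x3_0, x3_1, x3_2) ?a0 ?b0 ?mulr0 ?mulVf //.
by rewrite memvZ.
Qed.

Ltac ent := rewrite ?(addE, oppE, sclE, zeroE, mulE, hbrE, x3_0, x3_1, x3_2, v3_0, v3_1, v3_2) /om
  ?(addE, oppE, sclE, zeroE, mulE, hbrE, x3_0, x3_1, x3_2, v3_0, v3_1, v3_2).

Lemma partI (J : 'M[R]_3) :
  (exists p : {vspace vec}, ext_CR J p /\ ~ abelian_sub p) ->
  zero_torsion J -> exists! c : R, equiv_map J (@Mc R c).
Proof.
move=> [p [[Hdim HJp HJJ Hb Hc] Hna]] HT.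
have [X [Y [Xp [Yp HXY]]]] : exists X Y, X \in p /\ Y \in p /\ hbr X Y != 0.
  apply: NNPP => H; apply: Hna => X Y Xp Yp; apply: NNPP => Hn.
  by apply: H; exists X, Y; do !split => //; apply/eqP.
have hXY : om X Y != 0.
  by apply: contraNN HXY => /eqP h; rewrite hbr_om h scale0r.
have hX : X != 0.
  apply/eqP => X0; move: hXY; rewrite X0 /om !zeroE !mul0r subrr eqxx; by [].
have J12 : J i1 i2 = 0.
  have := congr1 (fun v : 'cV[R]_3 => v i1 0) (HT (v3 1 0 0) x3); ent => h; apply/eqP; rewrite -sqrf_eq0; apply/eqP; rewrite -[RHS]oppr0 -[in RHS]h; ring.
have J02 : J i0 i2 = 0.
  have := congr1 (fun v : 'cV[R]_3 => v i0 0) (HT (v3 0 1 0) x3); ent => h; apply/eqP; rewrite -sqrf_eq0; apply/eqP; rewrite -[RHS]h; ring.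
have Jx3 : J *m x3 = J i2 i2 *: x3 by apply: vecP; ent; rewrite ?J02 ?J12; lra.
have hl : om X (J *m X) != 0.
  apply/eqP => h0; have x3p := @x3_in J p X Xp hX (HJp X Xp) (HJJ X Xp) h0.
  have := congr1 (fun v : 'cV[R]_3 => v i2 0) (HJJ _ x3p).
  rewrite Jx3 -scalemxAr Jx3; ent; rewrite mulr1 => h.
  by have := sqr_ge0 (J i2 i2); rewrite expr2 h ler0N1.
set w := om X (J *m X) *: x3.
have [Pu HP] : mk3 X (J *m X) w \in unitmx /\
   forall U V, mk3 X (J *m X) w *m hbr U V = hbr (mk3 X (J *m X) w *m U) (mk3 X (J *m X) w *m V).
  by apply: aut3 => //; rewrite /w; ent; ring.
have E : equiv_map J (@Mc R (J i2 i2)).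
  apply: (equivP _ _ _ Pu HP).
  by rewrite mulmk3 mk3Mc HJJ // /w -scalemxAr Jx3 !scalerA mulrC.
exists (J i2 i2); split => // c' Hc'.
by have := tr_equiv _ _ Hc'; have := tr_equiv _ _ E; rewrite !trMc => -> ->.
Qed.

Lemma omZl a (u v : vec) : om (a *: u) v = a * om u v.
Proof. rewrite /om !sclE; ring. Qed.
Lemma omNx3 (u : vec) : om u (- x3) = 0.
Proof. rewrite /om !oppE x3_0 x3_1; ring. Qed.

Lemma partII (J : 'M[R]_3) :
  (exists p : {vspace vec}, ext_CR J p /\ abelian_sub p) ->
  (exists! t : R, equiv_map J (@Mt R t)) /\ ~ zero_torsion J.
Proof.
move=> [p [[Hdim HJp HJJ Hb Hc] Hab]].
have pnz : p != 0%VS by apply/eqP => p0; move: Hdim; rewrite p0 dimv0.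
pose X := vpick p.
have Xp : X \in p := memv_pick p.
have hX : X != 0 by rewrite vpick0.
have ho : om X (J *m X) = 0.
  have := congr1 (fun v : 'cV[R]_3 => v i2 0) (Hab _ _ Xp (HJp _ Xp)).
  by rewrite hbrE x3_2 mulr1 zeroE.
have x3p := @x3_in J p X Xp hX (HJp _ Xp) (HJJ _ Xp) ho.
have V2 : (J *m x3) i2 0 = J i2 i2 by rewrite mulE x3_0 x3_1 x3_2; ring.
pose V := J *m x3; have HJx3 : J *m x3 = V by [].
have HV : J *m V = - x3 by rewrite -HJx3 HJJ.
move: V2; rewrite HJx3 => V2.
clearbody V.
have hn : V i0 0 ^+ 2 + V i1 0 ^+ 2 != 0.
  apply/eqP => hn0.
  have v0 : V i0 0 = 0 by nra.
  have v1 : V i1 0 = 0 by nra.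
  have := congr1 (fun v : 'cV[R]_3 => v i2 0) HV.
  rewrite mulE oppE x3_2 v0 v1 V2 !mulr0 !add0r => h.
  by have := sqr_ge0 (J i2 i2); rewrite expr2 h ler0N1.
pose u := v3 (- V i1 0) (V i0 0) 0.
pose W := J *m u; have HJu : J *m u = W by [].
clearbody W.
have [t [b [c HW]]] : exists t b c, J *m u = t *: u + b *: V + c *: x3.
  exists ((V i0 0 * W i1 0 - V i1 0 * W i0 0) / (V i0 0 ^+ 2 + V i1 0 ^+ 2)).
  exists ((V i0 0 * W i0 0 + V i1 0 * W i1 0) / (V i0 0 ^+ 2 + V i1 0 ^+ 2)).
  exists (W i2 0 - (V i0 0 * W i0 0 + V i1 0 * W i1 0) / (V i0 0 ^+ 2 + V i1 0 ^+ 2) * V i2 0).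
  rewrite HJu; apply: vecP; rewrite /u; ent; field; exact: hn.
have ht : 1 + t ^+ 2 != 0.
  by apply/eqP => h; have := sqr_ge0 t; lra.
pose k1 := (c + t * b) / (1 + t ^+ 2).
pose k2 := (t * c - b) / (1 + t ^+ 2).
pose e := u + k1 *: V + k2 *: x3.
have He : J *m e = t *: e.
  rewrite /e !mulmxDr -!scalemxAr HV HJx3 HW.
  apply: vecP; ent; rewrite /k1 /k2; field; exact: ht.
have hs : om e V = - (V i0 0 ^+ 2 + V i1 0 ^+ 2).
  rewrite /e /u; ent; ring.
have hnn : - (V i0 0 ^+ 2 + V i1 0 ^+ 2) != 0 by rewrite oppr_eq0.
pose e' := (- (V i0 0 ^+ 2 + V i1 0 ^+ 2))^-1 *: e.
have He' : J *m e' = t *: e'.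
  by rewrite /e' -scalemxAr He !scalerA mulrC.
have hs' : om e' V = 1 by rewrite /e' omZl hs mulVf.
have [Pu HP] : mk3 e' V x3 \in unitmx /\
   forall U V', mk3 e' V x3 *m hbr U V' = hbr (mk3 e' V x3 *m U) (mk3 e' V x3 *m V').
  by apply: aut3; rewrite ?x3_0 ?x3_1 ?x3_2 ?hs' ?oner_eq0.
have E : equiv_map J (@Mt R t).
  apply: (equivP _ _ _ Pu HP).
  by rewrite mulmk3 mk3Mt He' HV HJx3.
split.
  exists t; split => // t' Ht'.
  by have := tr_equiv _ _ Ht'; have := tr_equiv _ _ E; rewrite !trMt => -> ->.
move=> HT; have := HT e' V; rewrite He' HV !hbr_om !omNx3 (omZl t e' V) hs' -!scalemxAr HJx3 => HN.
have h0 := congr1 (fun v : 'cV[R]_3 => v i0 0) HN.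
have h1 := congr1 (fun v : 'cV[R]_3 => v i1 0) HN.
have h2 := congr1 (fun v : 'cV[R]_3 => v i2 0) HN.
move: h0 h1 h2 => /=; ent => h0 h1 h2.
have t0 : t != 0.
  apply/eqP => t0; rewrite t0 in h2.
  have : (1:R) = 0 by lra.
  by move/eqP; rewrite oner_eq0.
have v0 : V i0 0 = 0.
  have : t * V i0 0 = 0 by lra.
  by move/eqP; rewrite mulf_eq0 (negbTE t0) => /eqP.
have v1 : V i1 0 = 0.
  have : t * V i1 0 = 0 by lra.
  by move/eqP; rewrite mulf_eq0 (negbTE t0) => /eqP.
by move: hn; rewrite v0 v1 expr2 mulr0 addr0 eqxx.
Qed.
End S.

Theorem lemma4 (R : realType) :
  (forall J : 'M[R]_3,
     (exists p : {vspace vec R}, ext_CR J p /\ ~ abelian_sub p) ->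
     zero_torsion J ->
     exists! c : R, equiv_map J (Mc c))
  /\
  (forall J : 'M[R]_3,
     (exists p : {vspace vec R}, ext_CR J p /\ abelian_sub p) ->
     (exists! t : R, equiv_map J (Mt t)) /\ ~ zero_torsion J).
Proof.
split; [exact: partI | exact: partII].
Qed.
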